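(* Let $\Gamma$ be a group acting by homeomorphisms on a Hausdorff topological space $\Omega$. Assume the action is strongly hyperbolic on $\Omega$ and strongly faithful on $L_\Gamma$. Then: (i) every non-empty closed $\Gamma$-invariant subset of $\Omega$ contains $\overline{L_\Gamma}$. Let moreover $N$ be a normal subgroup of $\Gamma$ containing a hyperbolic homeomorphism. Then: (ii) $\overline{L_N}=\overline{L_\Gamma}$; (iii) $N$ is a Powers group.
   Context: A homeomorphism $\gamma$ of $\Omega$ is hyperbolic if there are two points $\alpha(\gamma),\omega(\gamma)\in\Omega$ fixed by $\gamma$ such that for all neighbourhoods $U$ of $\alpha(\gamma)$ and $V$ of $\omega(\gamma)$ one has $\gamma^n(\Omega\setminus U)\subset V$ and $\gamma^{-n}(\Omega\setminus V)\subset U$ for all large $n$. Two hyperbolic homeomorphisms are transverse if they have no common fixed point; an action is strongly hyperbolic if the group contains two transverse hyperbolic homeomorphisms. For a group $\Lambda$ of homeomorphisms, $L_\Lambda=\{\eta\in\Omega\mid \eta=\omega(\gamma)\text{ for some hyperbolic }\gamma\in\Lambda\}$. An action on a set $X$ is strongly faithful if for every finite subset $F$ of the group not containing $1$ there is $x\in X$ with $\gamma(x)\neq x$ for all $\gamma\in F$. A group $N\neq\{1\}$ is a Powers group if for every finite $F\subset N\setminus\{1\}$ and integer $k\ge1$ there are a partition $N=C\sqcup D$ and $\gamma_1,\dots,\gamma_k\in N$ with $fC\cap C=\emptyset$ ($f\in F$) and $\gamma_iD\cap\gamma_jD=\emptyset$ ($i\ne j$). *)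

(* Defs.v *)
From Stdlib Require Import List Arith Classical.
Import ListNotations.


Record topology (X : Type) := Topology {
  is_open : (X -> Prop) -> Prop;
  open_full : is_open (fun _ => True);
  open_inter : forall U V, is_open U -> is_open V ->
                 is_open (fun x => U x /\ V x);
  open_union : forall (F : (X -> Prop) -> Prop),
                 (forall U, F U -> is_open U) ->
                 is_open (fun x => exists U, F U /\ U x)
}.
Arguments is_open {X} t _.

Definition is_closed {X : Type} (T : topology X) (S : X -> Prop) : Prop :=
  is_open T (fun x => ~ S x).

Definition hausdorff {X : Type} (T : topology X) : Prop :=
  forall x y, x <> y -> exists U V, is_open T U /\ is_open T V /\ U x /\ V y /\
    (forall z, ~ (U z /\ V z)).

Definition nbhd {X : Type} (T : topology X) (x : X) (U : X -> Prop) : Prop :=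
  exists O, is_open T O /\ O x /\ (forall y, O y -> U y).

Definition continuous {X : Type} (T : topology X) (f : X -> X) : Prop :=
  forall U, is_open T U -> is_open T (fun x => U (f x)).

Definition closure {X : Type} (T : topology X) (A : X -> Prop) : X -> Prop :=
  fun x => forall O, is_open T O -> O x -> exists y, O y /\ A y.

(** * Hyperbolic homeomorphisms.
    [f] is the homeomorphism, [finv] its inverse; [f^n] is [Nat.iter n f].
    [a] = alpha(f) (repelling), [w] = omega(f) (attracting). *)
Definition hyperbolic_pts {X : Type} (T : topology X) (f finv : X -> X) (a w : X) : Prop :=
  a <> w /\ f a = a /\ f w = w /\
  forall U V, nbhd T a U -> nbhd T w V ->
    exists n0, forall n, n0 <= n ->
      (forall x, ~ U x -> V (Nat.iter n f x)) /\
      (forall x, ~ V x -> U (Nat.iter n finv x)).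

Definition hyperbolic {X : Type} (T : topology X) (f finv : X -> X) : Prop :=
  exists a w, hyperbolic_pts T f finv a w.

Record group := Group {
  gcar :> Type;
  gmul : gcar -> gcar -> gcar;
  gone : gcar;
  ginv : gcar -> gcar;
  gmulA : forall x y z, gmul x (gmul y z) = gmul (gmul x y) z;
  gmul1 : forall x, gmul gone x = x;
  gmulV : forall x, gmul (ginv x) x = gone
}.
Arguments gmul {g} _ _ : rename.
Arguments gone {g}.
Arguments ginv {g} _.

Definition normal_subgroup {G : group} (N : G -> Prop) : Prop :=
  N gone /\
  (forall x y, N x -> N y -> N (gmul x y)) /\
  (forall x, N x -> N (ginv x)) /\
  (forall g x, N x -> N (gmul (gmul g x) (ginv g))).

Definition action_by_homeos {G : group} {X : Type} (T : topology X) (act : G -> X -> X) : Prop :=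
  (forall x, act gone x = x) /\
  (forall g h x, act (gmul g h) x = act g (act h x)) /\
  (forall g, continuous T (act g)).

Definition hyp_elt {G : group} {X : Type} (T : topology X) (act : G -> X -> X) (g : G) : Prop :=
  hyperbolic T (act g) (act (ginv g)).

Definition transverse {G : group} {X : Type} (T : topology X) (act : G -> X -> X) (g h : G) : Prop :=
  hyp_elt T act g /\ hyp_elt T act h /\
  ~ (exists x, act g x = x /\ act h x = x).

Definition strongly_hyperbolic {G : group} {X : Type} (T : topology X) (act : G -> X -> X) : Prop :=
  exists g h, transverse T act g h.

Definition limit_set {G : group} {X : Type} (T : topology X) (act : G -> X -> X)
  (Lam : G -> Prop) : X -> Prop :=
  fun eta => exists g, Lam g /\ exists a, hyperbolic_pts T (act g) (act (ginv g)) a eta.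

Definition strongly_faithful_on {G : group} {X : Type} (act : G -> X -> X) (Y : X -> Prop) : Prop :=
  forall F : list G, ~ In gone F ->
    exists x, Y x /\ forall g, In g F -> act g x <> x.

Definition powers {G : group} (N : G -> Prop) : Prop :=
  (exists x, N x /\ x <> gone) /\
  forall (F : list G) (k : nat),
    (forall f, In f F -> N f /\ f <> gone) -> 1 <= k ->
    exists (C D : G -> Prop) (gam : nat -> G),
      (forall x, N x <-> (C x \/ D x)) /\
      (forall x, ~ (C x /\ D x)) /\
      (forall i, i < k -> N (gam i)) /\
      (forall f, In f F -> forall c, C c -> ~ C (gmul f c)) /\
      (forall i j, i < k -> j < k -> i <> j ->
         forall d d', D d -> D d' -> gmul (gam i) d <> gmul (gam j) d').

(* Main.v *)
Require Import Defs.
From Stdlib Require Import List Arith Classical.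
From Stdlib Require Import Lia FunctionalExtensionality PropExtensionality.

Lemma iter_add_ {A : Type} (f : A -> A) n m x :
  Nat.iter (n + m) f x = Nat.iter n f (Nat.iter m f x).
Proof. induction n; simpl; [reflexivity | rewrite IHn; reflexivity]. Qed.

Lemma iter_inj_ {A : Type} (f : A -> A) :
  (forall x y, f x = f y -> x = y) -> forall n x y, Nat.iter n f x = Nat.iter n f y -> x = y.
Proof. intros Hf n; induction n; simpl; intros x y E; auto. Qed.

Section Main.
Variable G : group.

Lemma gmulV_r (g : G) : gmul g (ginv g) = gone.
Proof.
  assert (Hyy : gmul (gmul g (ginv g)) (gmul g (ginv g)) = gmul g (ginv g)).
  { rewrite <- gmulA. rewrite (gmulA G (ginv g) g (ginv g)), gmulV, gmul1. reflexivity. }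
  set (y := gmul g (ginv g)) in *.
  rewrite <- (gmul1 G y) at 1. rewrite <- (gmulV G y). rewrite <- gmulA, Hyy. reflexivity.
Qed.

Fixpoint gpow (g : G) (n : nat) : G :=
  match n with 0 => gone | S n => gmul g (gpow g n) end.

Variable X : Type.
Variable T : topology X.
Variable act : G -> X -> X.
Hypothesis Hh : hausdorff T.
Hypothesis Ha : action_by_homeos T act.

Lemma act_one x : act gone x = x.
Proof. apply Ha. Qed.
Lemma act_mul g h x : act (gmul g h) x = act g (act h x).
Proof. apply Ha. Qed.
Lemma act_cont g : continuous T (act g).
Proof. apply Ha. Qed.
Lemma act_inv_l g x : act (ginv g) (act g x) = x.
Proof. rewrite <- act_mul, gmulV. apply act_one. Qed.
Lemma act_inv_r g x : act g (act (ginv g) x) = x.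
Proof. rewrite <- act_mul, gmulV_r. apply act_one. Qed.
Lemma act_inj g x y : act g x = act g y -> x = y.
Proof. intro E. rewrite <- (act_inv_l g x), E. apply act_inv_l. Qed.
Lemma act_pow g n x : act (gpow g n) x = Nat.iter n (act g) x.
Proof. induction n; simpl. apply act_one. rewrite act_mul, IHn; reflexivity. Qed.

Lemma nbhd_open O x : is_open T O -> O x -> nbhd T x O.
Proof. intros HO Ox. exists O; auto. Qed.

Lemma nbhd_pre c p U : nbhd T (act c p) U -> nbhd T p (fun z => U (act c z)).
Proof.
  intros [O [HO [HOp HOU]]]. exists (fun z => O (act c z)).
  split; [apply act_cont; auto | split; auto].
Qed.

Lemma open_ext (P Q : X -> Prop) : is_open T P -> (forall x, P x <-> Q x) -> is_open T Q.
Proof.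
  intros HP HPQ. assert (E : P = Q).
  { extensionality x. apply propositional_extensionality. auto. }
  subst; auto.
Qed.

Lemma closure_closed A : is_closed T (closure T A).
Proof.
  unfold is_closed.
  apply open_ext with (P := fun x => exists O, (is_open T O /\ forall y, O y -> ~ A y) /\ O x).
  - apply open_union. intros U [HU _]; exact HU.
  - intro x; split.
    + intros [O [[HO HOA] HOx]] Hc. destruct (Hc O HO HOx) as [y [Hy HAy]].
      exact (HOA y Hy HAy).
    + intros Hn. apply NNPP; intro Hne. apply Hn. intros O HO HOx.
      apply NNPP; intro Hno. apply Hne. exists O. split; [split; auto|auto].
      intros y Hy HAy. apply Hno; exists y; auto.
Qed.

Lemma sub_closure (A : X -> Prop) x : A x -> closure T A x.
Proof. intros Ax O HO Ox. exists x; auto. Qed.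

Lemma sep1 x y : x <> y -> exists O, is_open T O /\ O x /\ ~ O y.
Proof.
  intro Hne. destruct (Hh x y Hne) as [U [V [HU [HV [Ux [Vy Hd]]]]]].
  exists U. split; auto. split; auto. intro Uy. apply (Hd y); auto.
Qed.

Lemma sep2 x y z : x <> y -> x <> z -> exists O, is_open T O /\ O x /\ ~ O y /\ ~ O z.
Proof.
  intros H1 H2. destruct (sep1 x y H1) as [A [HA [Ax Ay]]].
  destruct (sep1 x z H2) as [B [HB [Bx Bz]]].
  exists (fun u => A u /\ B u). split; [apply open_inter; auto|].
  split; [auto|]. split; intros [? ?]; auto.
Qed.

Lemma conj_hyp c h a w : hyperbolic_pts T (act h) (act (ginv h)) a w ->
  hyperbolic_pts T (act (gmul (gmul c h) (ginv c)))
    (act (ginv (gmul (gmul c h) (ginv c)))) (act c a) (act c w).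
Proof.
  intros [Haw [Hfa [Hfw Hdyn]]].
  set (k := gmul (gmul c h) (ginv c)).
  assert (Ek : forall y, act k y = act c (act h (act (ginv c) y))).
  { intro; unfold k; rewrite !act_mul; reflexivity. }
  assert (Eki : forall y, act (ginv k) y = act c (act (ginv h) (act (ginv c) y))).
  { intro y. apply (act_inj k). rewrite act_inv_r, Ek, act_inv_l, act_inv_r, act_inv_r.
    reflexivity. }
  assert (Iter : forall n y, Nat.iter n (act k) y = act c (Nat.iter n (act h) (act (ginv c) y))).
  { induction n; intro y; simpl. - rewrite act_inv_r; reflexivity.
    - rewrite IHn, Ek, act_inv_l; reflexivity. }
  assert (IterI : forall n y, Nat.iter n (act (ginv k)) y
                     = act c (Nat.iter n (act (ginv h)) (act (ginv c) y))).
  { induction n; intro y; simpl. - rewrite act_inv_r; reflexivity.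
    - rewrite IHn, Eki, act_inv_l; reflexivity. }
  split; [intro E; apply Haw; apply (act_inj c); exact E|].
  split; [rewrite Ek, act_inv_l, Hfa; reflexivity|].
  split; [rewrite Ek, act_inv_l, Hfw; reflexivity|].
  intros U V HU HV.
  destruct (Hdyn (fun z => U (act c z)) (fun z => V (act c z))
               (nbhd_pre _ _ _ HU) (nbhd_pre _ _ _ HV)) as [n0 Hn0].
  exists n0. intros n Hn. destruct (Hn0 n Hn) as [H1 H2]. split.
  - intros x Hx. rewrite Iter. apply H1. rewrite act_inv_r. exact Hx.
  - intros x Hx. rewrite IterI. apply H2. rewrite act_inv_r. exact Hx.
Qed.

Lemma orb z w : strongly_hyperbolic T act -> exists t, act t z <> z /\ act t z <> w.
Proof.
  intros [g [h [Hg [Hh' Hnc]]]]. apply NNPP; intro Hno.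
  assert (Hall : forall t, act t z = z \/ act t z = w).
  { intro t. apply NNPP; intro H. apply Hno. exists t. split; intro E; apply H; auto. }
  assert (Fix : forall g, hyp_elt T act g -> act g z = z).
  { intros g0 [a [o [Hao [Hfa [Hfo Hdyn]]]]]. apply NNPP; intro Hmv.
    assert (za : z <> a) by (intro E; apply Hmv; rewrite E; exact Hfa).
    assert (zo : z <> o) by (intro E; apply Hmv; rewrite E; exact Hfo).
    assert (Horb : forall n, Nat.iter n (act g0) z = z \/ Nat.iter n (act g0) z = w)
      by (intro n; rewrite <- act_pow; apply Hall).
    assert (HorbI : forall n, Nat.iter n (act (ginv g0)) z = z
                              \/ Nat.iter n (act (ginv g0)) z = w)
      by (intro n; rewrite <- act_pow; apply Hall).
    assert (ow : o = w).
    { apply NNPP; intro Hne.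
      destruct (sep2 o z w (fun E => zo (eq_sym E)) Hne) as [V [HV [HVo [HVz HVw]]]].
      destruct (sep1 a z (fun E => za (eq_sym E))) as [A [HA [HAa HAz]]].
      destruct (Hdyn A V (nbhd_open _ _ HA HAa) (nbhd_open _ _ HV HVo)) as [n0 Hn0].
      destruct (Hn0 n0 (le_n n0)) as [H1 _]. specialize (H1 z HAz).
      destruct (Horb n0) as [E|E]; rewrite E in H1; auto. }
    assert (aw : a = w).
    { apply NNPP; intro Hne.
      destruct (sep2 a z w (fun E => za (eq_sym E)) Hne) as [A [HA [HAa [HAz HAw]]]].
      destruct (sep1 o z (fun E => zo (eq_sym E))) as [V [HV [HVo HVz]]].
      destruct (Hdyn A V (nbhd_open _ _ HA HAa) (nbhd_open _ _ HV HVo)) as [n0 Hn0].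
      destruct (Hn0 n0 (le_n n0)) as [_ H2]. specialize (H2 z HVz).
      destruct (HorbI n0) as [E|E]; rewrite E in H2; auto. }
    apply Hao. congruence. }
  apply Hnc. exists z. split; apply Fix; auto.
Qed.

Lemma part_i : strongly_hyperbolic T act ->
  forall S : X -> Prop,
     is_closed T S -> (exists x, S x) -> (forall g x, S x -> S (act g x)) ->
     forall x, closure T (limit_set T act (fun _ => True)) x -> S x.
Proof.
  intros Hsh S HS [y Hy] Hinv.
  assert (HL : forall e, limit_set T act (fun _ => True) e -> S e).
  { intros e [g [_ [a Hp]]].
    assert (Hy' : exists y', S y' /\ y' <> a).
    { destruct (classic (y = a)) as [E|E].
      - subst y. destruct (orb a a Hsh) as [t [Ht _]]. exists (act t a); split; auto.
      - exists y; auto. }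
    destruct Hy' as [y' [Sy' Hya]].
    destruct Hp as [Hae [Hfa [Hfe Hdyn]]].
    apply NNPP; intro Hne.
    destruct (sep1 a y' (fun E => Hya (eq_sym E))) as [A [HA [HAa HAy]]].
    destruct (Hdyn A (fun x => ~ S x) (nbhd_open _ _ HA HAa) (nbhd_open _ _ HS Hne)) as [n0 Hn0].
    destruct (Hn0 n0 (le_n _)) as [H1 _]. apply (H1 y' HAy).
    rewrite <- act_pow. apply Hinv; auto. }
  intros x Hx. apply NNPP; intro Hn. destruct (Hx _ HS Hn) as [e [He1 He2]].
  apply He1, HL, He2.
Qed.

Lemma part_ii : strongly_hyperbolic T act ->
  forall N : G -> Prop,
     normal_subgroup N -> (exists g, N g /\ hyp_elt T act g) ->
     (forall x, closure T (limit_set T act N) x <->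
                closure T (limit_set T act (fun _ => True)) x).
Proof.
  intros Hsh N HN [g0 [Ng0 Hg0]] x.
  destruct HN as [HN1 [HN2 [HN3 HN4]]].
  split.
  - intros Hc O HO HOx. destruct (Hc O HO HOx) as [y [Hy [g [_ Hg]]]].
    exists y; split; auto. exists g; split; auto.
  - intro Hx. apply (part_i Hsh (closure T (limit_set T act N))); auto.
    + apply closure_closed.
    + destruct Hg0 as [a [w Hp]]. exists w. apply sub_closure.
      exists g0; split; auto. exists a; auto.
    + intros g z Hz O HO HOz.
      destruct (Hz (fun u => O (act g u)) (act_cont g O HO) HOz) as [y [Hy [h [Nh [a Hp]]]]].
      exists (act g y). split; auto. exists (gmul (gmul g h) (ginv g)). split; auto.
      exists (act g a). apply conj_hyp; auto.
Qed.

Lemma sep_list (F : list G) x0 : (forall f, In f F -> act f x0 <> x0) ->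
  exists U, is_open T U /\ U x0 /\ forall f, In f F -> forall y, U y -> ~ U (act f y).
Proof.
  induction F as [|f F IH]; intro HF.
  - exists (fun _ => True). split; [apply open_full|]. split; auto.
  - destruct IH as [U [HU [HUx HUF]]]. { intros f' Hf'; apply HF; right; auto. }
    destruct (Hh x0 (act f x0)) as [A [B [HA [HB [HAx [HBf Hdis]]]]]].
    { intro E; apply (HF f (or_introl eq_refl)); auto. }
    exists (fun y => U y /\ (A y /\ B (act f y))). split.
    { apply open_inter; auto. apply open_inter; auto. apply (act_cont f B HB). }
    split; [auto|].
    intros f' [E|Hin] y [Uy [Ay By]] [Uf [Af Bf]].
    + subst f'. apply (Hdis (act f y)); auto.
    + apply (HUF f' Hin y Uy Uf).
Qed.

Lemma pow_N (N : G -> Prop) g n : normal_subgroup N -> N g -> N (gpow g n).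
Proof.
  intros [HN1 [HN2 _]] Ng. induction n; simpl; auto.
Qed.

Lemma part_iii : strongly_hyperbolic T act ->
  strongly_faithful_on act (limit_set T act (fun _ => True)) ->
  forall N : G -> Prop,
     normal_subgroup N -> (exists g, N g /\ hyp_elt T act g) -> powers N.
Proof.
  intros Hsh Hsf N HN HNh.
  pose proof (part_ii Hsh N HN HNh) as Hii.
  destruct HN as [HN1 [HN2 [HN3 HN4]]].
  split.
  { destruct HNh as [g [Ng [a [w Hp]]]]. exists g; split; auto. intro E; subst g.
    destruct Hp as [Haw [_ [_ Hdyn]]].
    destruct (orb a w Hsh) as [t [Ht1 Ht2]]. set (z := act t a) in *.
    destruct (sep1 a z (fun E => Ht1 (eq_sym E))) as [A [HA [HAa HAz]]].
    destruct (sep1 w z (fun E => Ht2 (eq_sym E))) as [V [HV [HVw HVz]]].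
    destruct (Hdyn A V (nbhd_open _ _ HA HAa) (nbhd_open _ _ HV HVw)) as [n0 Hn0].
    destruct (Hn0 n0 (le_n _)) as [H1 _]. apply HVz. specialize (H1 z HAz).
    assert (Hid : forall n, Nat.iter n (act gone) z = z).
    { induction n; simpl; [reflexivity| rewrite IHn, act_one; reflexivity]. }
    rewrite Hid in H1. exact H1. }
  intros F k HF Hk.
  destruct (Hsf F) as [x0 [Lx0 Hx0]].
  { intro Hin. destruct (HF gone Hin) as [_ H]; auto. }
  destruct (sep_list F x0 Hx0) as [U [HU [HUx HUF]]].
  assert (Hcl : closure T (limit_set T act N) x0) by (apply Hii; apply sub_closure; auto).
  destruct (Hcl U HU HUx) as [o1 [Uo1 [h1 [Nh1 [a1 Hp1]]]]].
  pose proof Hp1 as Hp1'. destruct Hp1' as [Hao [Hfa [Hfo Hdyn]]].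
  destruct (orb a1 o1 Hsh) as [t [Ht1 Ht2]].
  set (u := ginv t).
  assert (Hp : act u a1 <> a1).
  { intro E. apply Ht1. rewrite <- E at 1. unfold u. apply act_inv_r. }
  assert (Hq : act u o1 <> a1).
  { intro E. apply Ht2. rewrite <- E. unfold u. apply act_inv_r. }
  destruct (sep2 a1 (act u a1) (act u o1) (fun E => Hp (eq_sym E)) (fun E => Hq (eq_sym E)))
    as [A [HA [HAa [HAp HAq]]]].
  destruct (Hdyn A U (nbhd_open _ _ HA HAa) (nbhd_open _ _ HU Uo1)) as [n0 Hn0].
  destruct (Hn0 n0 (le_n _)) as [H1 _].
  set (c := gmul (gpow h1 n0) u).
  pose proof (conj_hyp c h1 a1 o1 Hp1) as Hk'.
  set (kk := gmul (gmul c h1) (ginv c)) in *.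
  assert (Nk : N kk) by (apply HN4; auto).
  assert (Uca : U (act c a1)). { unfold c. rewrite act_mul, act_pow. apply H1; auto. }
  assert (Uco : U (act c o1)). { unfold c. rewrite act_mul, act_pow. apply H1; auto. }
  destruct Hk' as [_ [_ [_ Hdk]]].
  destruct (Hdk U U (nbhd_open _ _ HU Uca) (nbhd_open _ _ HU Uco)) as [n1 Hn1].
  set (m := S n1).
  assert (Key : forall i j d d', i < j -> ~ U (act d x0) -> ~ U (act d' x0) ->
            gmul (gpow kk (i * m)) d = gmul (gpow kk (j * m)) d' -> False).
  { intros i j e e' Hlt He He' E.
    assert (E2 := f_equal (fun g => act g x0) E). simpl in E2.
    rewrite !act_mul, !act_pow in E2.
    replace (j * m) with (i * m + (j - i) * m) in E2 by nia.
    rewrite iter_add_ in E2.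
    apply iter_inj_ in E2; [| apply act_inj].
    apply He. rewrite E2. destruct (Hn1 ((j - i) * m)) as [H _].
    { unfold m; nia. }
    apply H; auto. }
  exists (fun y => N y /\ U (act y x0)), (fun y => N y /\ ~ U (act y x0)),
    (fun i => gpow kk (i * m)).
  split. { intro y; split.
    - intro Ny. destruct (classic (U (act y x0))); [left|right]; auto.
    - intros [[]|[]]; auto. }
  split. { intros y [[_ H] [_ H']]; auto. }
  split. { intros i _; apply pow_N; auto. repeat split; auto. }
  split. { intros f Hf c' [_ Hc] [_ Hfc]. rewrite act_mul in Hfc. apply (HUF f Hf _ Hc Hfc). }
  intros i j Hi Hj Hij d d' [_ Hd] [_ Hd'] E.
  destruct (lt_eq_lt_dec i j) as [[Hlt|Heq]|Hgt].
  - exact (Key i j d d' Hlt Hd Hd' E).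
  - auto.
  - exact (Key j i d' d Hgt Hd' Hd (eq_sym E)).
Qed.

End Main.

Theorem proposition7p1 (G : group) (X : Type) (T : topology X) (act : G -> X -> X) :
  hausdorff T ->
  action_by_homeos T act ->
  strongly_hyperbolic T act ->
  strongly_faithful_on act (limit_set T act (fun _ => True)) ->
  (* (i) *)
  (forall S : X -> Prop,
     is_closed T S -> (exists x, S x) -> (forall g x, S x -> S (act g x)) ->
     forall x, closure T (limit_set T act (fun _ => True)) x -> S x) /\
  (* (ii) and (iii) *)
  (forall N : G -> Prop,
     normal_subgroup N -> (exists g, N g /\ hyp_elt T act g) ->
     (forall x, closure T (limit_set T act N) x <->
                closure T (limit_set T act (fun _ => True)) x) /\
     powers N).
Proof.
  intros Hh Ha Hsh Hsf. split.
  - eapply part_i; eauto.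
  - intros N HN HNh. split.
    + eapply part_ii; eauto.
    + eapply part_iii; eauto.
Qed.
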